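(* Suppose the Lipschitz assumption holds, and let $K^3_t>0$ be a constant with $\|\hat f_t(z_1,\gamma)-\hat f_t(z_2,\gamma)\|_\infty\le K^3_t\|z_1-z_2\|_\infty$ for all $\gamma\in\mathcal G$, $z_1,z_2\in\mathcal I(\mathcal X)$. Let $t\in\mathbb N_T$, $\gamma_t\in\mathcal G$, let $m_t\in\mathcal M_n$ be the empirical distribution of the agents' states at time $t$, and $z_t\in\Delta(\mathcal X)$. Suppose every agent uses $u^i_t=\gamma_t(x^i_t)$, let $m_{t+1}$ be the resulting empirical distribution at time $t+1$, and let $z_{t+1}=\hat f_t(z_t,\gamma_t)$. Then $$\mathbb E\big[\|m_{t+1}-z_{t+1}\|_\infty\big]\le K^3_t\|m_t-z_t\|_\infty+\mathcal O(1/\sqrt n).$$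
   Context: Fix $n\in\mathbb N$ agents, $T\in\mathbb N$, finite sets $\mathcal X,\mathcal U,\mathcal W$; $\mathbb N_k=\{1,\dots,k\}$; $\mathcal I(\mathcal X)=[0,1]^{\mathcal X}$; $\Delta(\mathcal X)$ the probability vectors on $\mathcal X$; $\mathcal M_n=\{m\in\Delta(\mathcal X):m(x)\in\{0,\tfrac1n,\dots,1\}\}$. Agent $i$ has state $x^i_t$ and action $u^i_t$; mean-field $m_t(x)=\frac1n\sum_i\mathbb 1(x^i_t=x)$; dynamics $x^i_{t+1}=f_t(x^i_t,u^i_t,w^i_t,m_t)$ with $f_t:\mathcal X\times\mathcal U\times\mathcal W\times\mathcal I(\mathcal X)\to\mathcal X$, where $w^1_t,\dots,w^n_t$ are i.i.d. with law $\mathbb P(w_t=\cdot)$ and independent of the states at time $t$. $\mathbb P(y|x,u,z)=\sum_w\mathbb 1(f_t(x,u,w,z)=y)\mathbb P(w_t=w)$; costs $\ell_t:\mathcal X\times\mathcal U\times\mathcal I(\mathcal X)\to\mathbb R_{\ge0}$. Lipschitz assumption: constants $K^1_t,K^2_t>0$ with $|\mathbb P(y|x,u,z_1)-\mathbb P(y|x,u,z_2)|\le K^1_t\|z_1-z_2\|_\infty$, $|\ell_t(x,u,z_1)-\ell_t(x,u,z_2)|\le K^2_t\|z_1-z_2\|_\infty$ for all $x,y,u$, $z_1,z_2\in\mathcal I(\mathcal X)$. $\mathcal G$ is the set of maps $\gamma:\mathcal X\to\mathcal U$; $\hat f_t(z,\gamma)(y)=\sum_x z(x)\mathbb P(y|x,\gamma(x),z)$.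 Model data do not depend on $n$; $\mathcal O(1/\sqrt n)$ denotes a quantity bounded by $C/\sqrt n$ with $C$ independent of $n$, $m_t$, $z_t$, $\gamma_t$. *)

(* Defs.v *)
From HB Require Import structures.
From mathcomp Require Import all_boot all_order all_algebra.
From mathcomp Require Import reals.
Set Implicit Arguments. Unset Strict Implicit. Unset Printing Implicit Defensive.
Import Order.TTheory GRing.Theory Num.Theory.
Local Open Scope ring_scope.

Section MF.
Variable R : realType.
Variables X U W : finType.

Definition supn (v : {ffun X -> R}) : R := \big[Num.max/0]_(x : X) `|v x|.

Definition inI (z : {ffun X -> R}) : Prop := forall x, 0 <= z x <= 1.

Definition inDelta (z : {ffun X -> R}) : Prop :=
  (forall x, 0 <= z x) /\ \sum_(x : X) z x = 1.

Definition trans (f : nat -> X -> U -> W -> {ffun X -> R} -> X)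
  (pw : nat -> W -> R) (t : nat) (y x : X) (u : U) (z : {ffun X -> R}) : R :=
  \sum_(w : W) (f t x u w z == y)%:R * pw t w.

Definition fhat (f : nat -> X -> U -> W -> {ffun X -> R} -> X) (pw : nat -> W -> R) (t : nat) (z : {ffun X -> R}) (g : X -> U) : {ffun X -> R} :=
  [ffun y => \sum_(x : X) z x * trans f pw t y x (g x) z].

Definition emp (n : nat) (xs : 'I_n -> X) : {ffun X -> R} :=
  [ffun x => (#|[set i | xs i == x]|)%:R / n%:R].

Definition next_states (f : nat -> X -> U -> W -> {ffun X -> R} -> X) (t : nat) (n : nat) (xs : 'I_n -> X) (g : X -> U)
  (w : 'I_n -> W) : 'I_n -> X :=
  fun i => f t (xs i) (g (xs i)) (w i) (emp xs).

(* E[ || m_{t+1} - z_{t+1} ||_inf ] given the states at time t,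
   the noises w^1..w^n being i.i.d. with law pw t *)
Definition exp_err (f : nat -> X -> U -> W -> {ffun X -> R} -> X) (pw : nat -> W -> R) (t : nat) (n : nat) (xs : 'I_n -> X) (g : X -> U)
  (z : {ffun X -> R}) : R :=
  \sum_(w : {ffun 'I_n -> W})
    (\prod_(i < n) pw t (w i)) *
    supn (emp (next_states f t xs g w) - fhat f pw t z g).
End MF.

(* Main.v *)
Require Import Defs.
From HB Require Import structures.
From mathcomp Require Import all_boot all_order all_algebra.
From mathcomp Require Import reals.
From mathcomp Require Import ring lra.
Import Order.TTheory GRing.Theory Num.Theory.
Local Open Scope ring_scope.
Section Ex.
Variables (R : realType) (W : finType) (n : nat) (p : W -> R).
Hypothesis hp0 : forall w, 0 <= p w.
Hypothesis hp1 : \sum_w p w = 1.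

Definition Ex (F : {ffun 'I_n -> W} -> R) : R :=
  \sum_(w : {ffun 'I_n -> W}) (\prod_(i < n) p (w i)) * F w.

Lemma Ex_ext' F G : (forall w, F w = G w) -> Ex F = Ex G.
Proof. by move=> H; apply: eq_bigr => w _; rewrite H. Qed.

Lemma Ex_indep (h : 'I_n -> W -> R) :
  Ex (fun w => \prod_i h i (w i)) = \prod_i \sum_v p v * h i v.
Proof.
rewrite bigA_distr_bigA /Ex; apply: eq_bigr => w _.
by rewrite big_split.
Qed.

Lemma Ex1 : Ex (fun _ => 1) = 1.
Proof.
have E := Ex_indep (fun _ _ => 1).
have H1 : forall w : {ffun 'I_n -> W}, \prod_(i < n) (fun _ _ => 1 : R) i (w i) = 1.
  by move=> w; rewrite big1.
rewrite (Ex_ext' _ (fun _ => 1) H1) in E.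
rewrite E big1 // => i _.
by under eq_bigr do rewrite mulr1.
Qed.

Lemma Ex_cst c : Ex (fun _ => c) = c.
Proof.
rewrite -[c in RHS]mulr1 -Ex1 /Ex big_distrr; apply: eq_bigr => w _.
by rewrite mulr1 mulrC.
Qed.

Lemma Ex_le F G : (forall w, F w <= G w) -> Ex F <= Ex G.
Proof.
move=> H; apply: ler_sum => w _; apply: ler_wpM2l => //.
by apply: prodr_ge0.
Qed.

Lemma Ex_add F G : Ex (fun w => F w + G w) = Ex F + Ex G.
Proof. by rewrite /Ex -big_split; apply: eq_bigr => w _; rewrite mulrDr. Qed.

Lemma Ex_scale c F : Ex (fun w => c * F w) = c * Ex F.
Proof. by rewrite /Ex big_distrr; apply: eq_bigr => w _; rewrite mulrCA. Qed.

Lemma Ex_sum (I : finType) (F : I -> {ffun 'I_n -> W} -> R) :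
  Ex (fun w => \sum_k F k w) = \sum_k Ex (F k).
Proof.
rewrite /Ex exchange_big; apply: eq_bigr => w _; by rewrite big_distrr.
Qed.

Lemma Ex_ext F G : (forall w, F w = G w) -> Ex F = Ex G.
Proof. by move=> H; apply: eq_bigr => w _; rewrite H. Qed.

End Ex.
Section Var.
Variables (R : realType) (W : finType) (n : nat) (p : W -> R).
Hypothesis hp0 : forall w, 0 <= p w.
Hypothesis hp1 : \sum_w p w = 1.
Variable c : 'I_n -> W -> R.
Hypothesis hc : forall i v, `|c i v| <= 1.
Hypothesis hm : forall i, \sum_v p v * c i v = 0.
Local Notation EE := (Ex R W n p).
Local Notation Ex_cst := (Ex_cst R W n p).
Local Notation Ex_le := (Ex_le R W n p).
Local Notation Ex_ext' := (Ex_ext' R W n p).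
Local Notation Ex_sum := (Ex_sum R W n p).

Lemma Ex_pair i j :
  EE (fun w : {ffun 'I_n -> W} => c i (w i) * c j (w j)) <= (i == j)%:R.
Proof.
case: eqVneq => [<-|nij].
  rewrite -(Ex_cst hp1 1); apply: (Ex_le hp0) => w.
  rewrite (le_trans (ler_norm _)) // normrM -[1](mulr1 1).
  by apply: ler_pM.
pose H k v := if k == i then c i v else if k == j then c j v else 1.
have E := Ex_indep R W n p H.
have -> : EE (fun w : {ffun 'I_n -> W} => c i (w i) * c j (w j)) = 0.
  rewrite -[RHS](_ : \prod_k \sum_v p v * H k v = 0).
    rewrite -E; apply: Ex_ext' => w.
    rewrite (bigD1 i) //= (bigD1 j) /=; last by rewrite eq_sym.
    rewrite big1 ?mulr1; last first.
      by move=> k /andP[ki kj]; rewrite /H (negbTE ki) (negbTE kj).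
    by rewrite /H eqxx eq_sym (negbTE nij) eqxx.
  rewrite (bigD1 i) //=.
  have -> : \sum_v p v * H i v = 0.
    by rewrite (eq_bigr (fun v => p v * c i v)) ?hm // => v _; rewrite /H eqxx.
  by rewrite mul0r.
by [].
Qed.

Lemma Ex_sq : EE (fun w : {ffun 'I_n -> W} =>
   (\sum_i c i (w i)) * (\sum_i c i (w i))) <= n%:R.
Proof.
have -> : EE (fun w : {ffun 'I_n -> W} =>
   (\sum_i c i (w i)) * (\sum_i c i (w i))) =
   \sum_i \sum_j EE (fun w : {ffun 'I_n -> W} => c i (w i) * c j (w j)).
  transitivity (\sum_i EE (fun w : {ffun 'I_n -> W} => \sum_j c i (w i) * c j (w j))).
    rewrite -Ex_sum; apply: Ex_ext' => w; rewrite big_distrl; apply: eq_bigr => i _.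
    by rewrite big_distrr.
  by apply: eq_bigr => i _; rewrite Ex_sum.
apply: le_trans (ler_sum _ (fun i _ => ler_sum _ (fun j _ => Ex_pair i j))) _.
rewrite (eq_bigr (fun _ => 1)); first by rewrite sumr_const card_ord.
move=> i _; rewrite (bigD1 i) //= eqxx big1 ?addr0 // => j /negbTE.
by rewrite eq_sym => ->.
Qed.

Lemma Ex_abs_avg : (0 < n)%N ->
  EE (fun w : {ffun 'I_n -> W} => `| n%:R^-1 * \sum_i c i (w i) |)
    <= (Num.sqrt n%:R)^-1.
Proof.
move=> n0.
set s := Num.sqrt n%:R.
have np : 0 < n%:R :> R by rewrite ltr0n.
have sp : 0 < s by rewrite sqrtr_gt0.
have ss : s * s = n%:R by rewrite -expr2 sqr_sqrtr // ltW.
set u := s^-1.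
have su : s * u = 1 by rewrite mulfV // gt_eqF.
have up : 0 < u by rewrite invr_gt0.
have pt : forall D : R, `|D| <= 2^-1 * s * (D * D) + 2^-1 * u.
  move=> D; have DD : D * D = `|D| * `|D| by rewrite -normrM ger0_norm // -expr2 sqr_ge0.
  rewrite DD.
  have a0 := normr_ge0 D.
  have h1 := mulr_ge0 (ltW up) (sqr_ge0 (s * `|D| - 1)).
  have e : u * (s * `|D| - 1) ^+ 2 = s * (`|D| * `|D|) - 2 * `|D| + u.
    have -> : u * (s * `|D| - 1) ^+ 2 = (s * u) * (s * (`|D| * `|D|)) - 2 * (s * u) * `|D| + u by ring.
    rewrite su; ring.
  rewrite e in h1; lra.
apply: le_trans (Ex_le hp0 _ _ (fun w => pt _)) _.
set S := fun w : {ffun 'I_n -> W} => \sum_i c i (w i).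
rewrite Ex_add (Ex_cst hp1).
rewrite (Ex_scale R W n p (2^-1 * s) (fun w => (n%:R^-1 * S w) * (n%:R^-1 * S w))).
rewrite (Ex_ext' _ (fun w => (n%:R^-1 * n%:R^-1) * (S w * S w))); last by move=> w; ring.
rewrite (Ex_scale R W n p (n%:R^-1 * n%:R^-1) (fun w => S w * S w)).
have h := Ex_sq.
have nu : n%:R^-1 = u * u by rewrite -ss invfM.
have h2 : n%:R^-1 * n%:R^-1 * EE (fun w => S w * S w) <= u * u.
  apply: le_trans (ler_wpM2l _ h) _; first by rewrite mulr_ge0 // invr_ge0 ltW.
  by rewrite -mulrA mulVf ?gt_eqF // mulr1 nu.
have h3 : s * (u * u) = u by rewrite mulrA su mul1r.
have h4 : 2^-1 * s * (n%:R^-1 * n%:R^-1 * EE (fun w => S w * S w)) <= 2^-1 * u.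
  rewrite -mulrA; apply: ler_wpM2l; first by rewrite invr_ge0.
  by rewrite -h3; apply: ler_wpM2l => //; exact: ltW.
lra.
Qed.


End Var.
Section Supn.
Variables (R : realType) (X : finType).

Lemma supn_ge0 (v : {ffun X -> R}) : 0 <= supn v.
Proof.
rewrite /supn; apply: (big_ind (fun a => 0 <= a)) => //.
by move=> a b ha hb; rewrite le_max ha.
Qed.

Lemma supn_le (v : {ffun X -> R}) B : 0 <= B -> (forall x, `|v x| <= B) -> supn v <= B.
Proof.
move=> B0 H; rewrite /supn; apply: (big_ind (fun a => a <= B)) => //.
by move=> a b ha hb; rewrite ge_max ha hb.
Qed.

Lemma supn_sum (v : {ffun X -> R}) : supn v <= \sum_x `|v x|.
Proof.
apply: supn_le; first by apply: sumr_ge0.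
move=> x; rewrite (bigD1 x) //= lerDl; exact: sumr_ge0.
Qed.

Lemma le_supn (v : {ffun X -> R}) x : `|v x| <= supn v.
Proof.
rewrite /supn (bigD1 x) //= le_max lexx //.
Qed.

Lemma supn_tri (a b : {ffun X -> R}) : supn (a + b) <= supn a + supn b.
Proof.
apply: supn_le; first by rewrite addr_ge0 // supn_ge0.
move=> x; rewrite ffunE; apply: le_trans (ler_normD _ _) _.
by rewrite lerD // le_supn.
Qed.
End Supn.

Lemma cardE (I : finType) (P : pred I) (R : realType) :
  (#|[set i | P i]|%:R : R) = \sum_i (P i)%:R.
Proof.
rewrite -sum1_card natr_sum big_mkcond /=; apply: eq_bigr => i _.
by rewrite inE; case: (P i).
Qed.

Theorem lemma5 (R : realType) (X U W : finType) (T : nat)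
  (f : nat -> X -> U -> W -> {ffun X -> R} -> X)
  (pw : nat -> W -> R)
  (ell : nat -> X -> U -> {ffun X -> R} -> R)
  (K1 K2 K3 : nat -> R)
  (hpw0 : forall t w, 0 <= pw t w)
  (hpw1 : forall t, \sum_(w : W) pw t w = 1)
  (hell0 : forall t x u z, 0 <= ell t x u z)
  (hK1 : forall t, 0 < K1 t) (hK2 : forall t, 0 < K2 t) (hK3 : forall t, 0 < K3 t)
  (hLipP : forall t y x u z1 z2, inI z1 -> inI z2 ->
     `|trans f pw t y x u z1 - trans f pw t y x u z2| <= K1 t * supn (z1 - z2))
  (hLipl : forall t x u z1 z2, inI z1 -> inI z2 ->
     `|ell t x u z1 - ell t x u z2| <= K2 t * supn (z1 - z2))
  (hLipf : forall t (g : X -> U) z1 z2, inI z1 -> inI z2 ->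
     supn (fhat f pw t z1 g - fhat f pw t z2 g) <= K3 t * supn (z1 - z2))
  (t : nat) (ht : (1 <= t <= T)%N) :
  exists C : R, forall (n : nat) (xs : 'I_n -> X) (g : X -> U) (z : {ffun X -> R}),
    (0 < n)%N -> inDelta z ->
    exp_err f pw t xs g z
      <= K3 t * supn (emp R xs - z) + C / Num.sqrt (n%:R).
Proof.
exists (#|X|%:R) => n xs g z n0 [z0 z1].
set m := emp R xs.
have np : 0 < n%:R :> R by rewrite ltr0n.
have mI : inI m.
  move=> x; rewrite /m /emp ffunE divr_ge0 ?ler0n //= ler_pdivrMr // mul1r ler_nat.
  by apply: leq_trans (max_card _) _; rewrite card_ord.
have zI : inI z.
  move=> x; rewrite z0 /= -z1 (bigD1 x) //= lerDl; exact: sumr_ge0.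
have trb : forall y x u zz, 0 <= trans f pw t y x u zz <= 1.
  move=> y x u zz; rewrite /trans sumr_ge0 /=; last by move=> w _; rewrite mulr_ge0.
  rewrite -[X in _ <= X](hpw1 t); apply: ler_sum => w _; rewrite ler_piMl //.
  by case: (_ == _).
pose c := fun (y : X) (i : 'I_n) (v : W) =>
  (f t (xs i) (g (xs i)) v m == y)%:R - trans f pw t y (xs i) (g (xs i)) m.
have hc : forall y i v, `|c y i v| <= 1.
  move=> y i v; rewrite /c ler_norml; have := trb y (xs i) (g (xs i)) m.
  by case: (_ == _) => /andP[]; rewrite /=; lra.
have hm : forall y i, \sum_v pw t v * c y i v = 0.
  move=> y i; rewrite /c; under eq_bigr do rewrite mulrBr.
  rewrite sumrB -big_distrl /= hpw1 mul1r /trans ; apply/eqP; rewrite subr_eq0; apply/eqP.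
  by apply: eq_bigr => v _; rewrite mulrC.
have mE : forall x, m x = n%:R^-1 * \sum_i (xs i == x)%:R.
  by move=> x; rewrite /m /emp ffunE cardE mulrC.
have fE : forall y, \sum_x m x * trans f pw t y x (g x) m = n%:R^-1 * \sum_i trans f pw t y (xs i) (g (xs i)) m.
  move=> y.
  transitivity (\sum_x \sum_i n%:R^-1 * ((xs i == x)%:R * trans f pw t y x (g x) m)).
    by apply: eq_bigr => x _; rewrite mE -mulrA big_distrl big_distrr.
  rewrite exchange_big big_distrr /=; apply: eq_bigr => i _; rewrite -big_distrr /=.
  congr (_ * _).
  rewrite (bigD1 (xs i)) //= eqxx mul1r big1 ?addr0 // => x /negbTE xne.
  by rewrite eq_sym xne mul0r.
have Dy : forall (w : {ffun 'I_n -> W}) y,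
   (emp R (next_states f t xs g w) - fhat f pw t m g) y = n%:R^-1 * \sum_i c y i (w i).
  move=> w y; rewrite !ffunE fE cardE /c sumrB mulrBr mulrC.
  by [].
set u := (Num.sqrt n%:R)^-1.
have key : forall y, Ex R W n (pw t)
    (fun w => `|(emp R (next_states f t xs g w) - fhat f pw t m g) y|) <= u.
  move=> y; rewrite (Ex_ext' _ _ _ _ _ (fun w => `|n%:R^-1 * \sum_i c y i (w i)|)).
    exact: Ex_abs_avg.
  by move=> w; rewrite Dy.
change (Ex R W n (pw t) (fun w => supn (emp R (next_states f t xs g w) - fhat f pw t z g))
   <= K3 t * supn (m - z) + #|X|%:R / Num.sqrt n%:R).
apply: le_trans (Ex_le _ _ _ _ (hpw0 t) _
   (fun w => \sum_y `|(emp R (next_states f t xs g w) - fhat f pw t m g) y| + K3 t * supn (m - z)) _) _.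
  move=> w.
  have eq : (emp R (next_states f t xs g w) - fhat f pw t m g) + (fhat f pw t m g - fhat f pw t z g)
     = emp R (next_states f t xs g w) - fhat f pw t z g by rewrite addrA subrK.
  rewrite -eq; apply: le_trans (supn_tri _ _ _ _) _; apply: lerD; first exact: supn_sum.
  exact: hLipf.
rewrite Ex_add (Ex_cst _ _ _ _ (hpw1 t)) Ex_sum addrC lerD2l.
apply: le_trans (ler_sum _ (fun y _ => key y)) _.
have hh : forall a : R, a *+ #|X| = #|X|%:R * a by move=> a; rewrite mulr_natl.
rewrite sumr_const hh /u; exact: lexx.
Qed.
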